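(* Let $G$ be a finite simple graph that contains a subdivision of $K_4^-$ as a subgraph. Then $S(G)$ contains a subdivision of $K_{3,3}$ as a subgraph.
   Context: $K_4^-$ denotes the complete graph $K_4$ with one edge removed (the diamond graph). A subdivision of a graph $F$ is a graph obtained from $F$ by replacing edges with internally vertex-disjoint paths. For a graph $G$, the great shadow $S(G)$ is the graph obtained from $G$ by adding, for each vertex $v$ of $G$, a new vertex $v'$ (the shadow vertex of $v$) and making $v'$ adjacent to $v$ and to every neighbor of $v$ in $G$; no other edges are added. *)

(* Defs.v *)
From mathcomp Require Import all_boot.
Set Implicit Arguments. Unset Strict Implicit. Unset Printing Implicit Defensive.

Definition simple_graph (T : finType) (e : rel T) : Prop :=
  symmetric e /\ irreflexive e.

(* interior vertices of the path x :: q (all but first and last) *)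
Definition interior (T : Type) (q : seq T) : seq T := take (size q).-1 q.

(* G = (T,e) contains a subdivision of F = (V,f) as a subgraph:
   branch vertices phi (injective); for each edge ab of F a path
   phi a :: P a b from phi a to phi b in G (simple); the interiors of
   these paths avoid all branch vertices and interiors of paths of
   distinct edges are disjoint. *)
Definition contains_subdivision (V : finType) (f : rel V)
    (T : finType) (e : rel T) : Prop :=
  exists (phi : V -> T) (P : V -> V -> seq T),
    [/\ injective phi,
        (forall a b, f a b ->
           [/\ path e (phi a) (P a b), last (phi a) (P a b) = phi b
             & uniq (phi a :: P a b)]),
        (forall a b v, f a b -> phi v \notin interior (P a b))
      & (forall a b c d, f a b -> f c d ->
           ~ ((a = c /\ b = d) \/ (a = d /\ b = c)) ->
           forall x, x \in interior (P a b) -> x \notin interior (P c d))].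

Definition K4minus : rel 'I_4 :=
  fun a b => (a != b) &&
    ~~ (((a == 2 :> nat) && (b == 3 :> nat)) || ((a == 3 :> nat) && (b == 2 :> nat))).

Definition K33 : rel 'I_6 := fun a b => (a < 3) != (b < 3).

(* Great shadow S(G): vertices inl v (original) and inr v (shadow v');
   v' adjacent to v and to every neighbour of v. *)
Definition shadow_rel (T : finType) (e : rel T) : rel (T + T) :=
  fun x y => match x, y with
  | inl u, inl v => e u v
  | inl u, inr v => (u == v) || e v u
  | inr u, inl v => (u == v) || e u v
  | inr _, inr _ => false
  end.

(* Main.v *)
Require Import Defs.
From mathcomp Require Import all_boot.
Set Implicit Arguments. Unset Strict Implicit. Unset Printing Implicit Defensive.

Section Gen.
Variable S : eqType.

Lemma mem_interior (x : S) (p : seq S) z :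
  uniq p -> (z \in interior p) = (z \in p) && (z != last x p).
Proof.
case/lastP: p => [|s l] // Hu.
rewrite /interior size_rcons -cats1 take_size_cat // cats1 mem_rcons last_rcons in_cons.
move: Hu; rewrite rcons_uniq => /andP[Hl _].
case: (eqVneq z l) => [->|Hne]; first by rewrite (negbTE Hl).
by rewrite andbT.
Qed.

Lemma last_rev_belast (x : S) p : last (last x p) (rev (belast x p)) = x.
Proof. case: p => [|y p] //=. by rewrite rev_cons last_rcons. Qed.

Lemma uniq_rev_belast (x : S) p : uniq (x :: p) -> uniq (last x p :: rev (belast x p)).
Proof.
rewrite [x :: p]lastI rcons_uniq => /andP[H1 H2].
by rewrite /= mem_rev H1 rev_uniq.
Qed.

Lemma mem_interior_rev (x : S) p z : uniq (x :: p) ->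
  (z \in interior (rev (belast x p))) = (z \in interior p).
Proof.
move=> Hu.
have Hu' := uniq_rev_belast Hu.
move: (Hu') => /= /andP[_ Hr].
rewrite (mem_interior (last x p) _ Hr) last_rev_belast.
move: (Hu) => /= /andP[Hx Hp]; rewrite (mem_interior x _ Hp) mem_rev.
case: p Hu Hx Hp {Hu' Hr} => [|y p] Hu Hx Hp //.
rewrite /= in_cons.
have E : y :: p = rcons (belast y p) (last y p) by apply: lastI.
move: Hx Hp; rewrite E mem_rcons rcons_uniq in_cons => Hx /andP[HL _].
rewrite mem_rcons in_cons.
case: (eqVneq z x) => [->|Hzx] /=.
  by rewrite (negbTE Hx).
case: (eqVneq z (last y p)) => [->|Hzl] /=; first by rewrite (negbTE HL).
by rewrite andbT.
Qed.

Lemma path_rev_belast (e : rel S) x p : symmetric e -> path e x p ->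
  path e (last x p) (rev (belast x p)).
Proof.
move=> He Hp; rewrite rev_path; apply: etrans Hp; apply: eq_path => a b; exact: He.
Qed.

End Gen.

Lemma K33_build (S : finType) (g : rel S) (phi : 'I_6 -> S) (Q : 'I_6 -> 'I_6 -> seq S) :
  symmetric g -> injective phi ->
  (forall a b : 'I_6, a < 3 -> 3 <= b ->
     [/\ path g (phi a) (Q a b), last (phi a) (Q a b) = phi b & uniq (phi a :: Q a b)]) ->
  (forall (a b v : 'I_6), a < 3 -> 3 <= b -> phi v \notin interior (Q a b)) ->
  (forall a b c d : 'I_6, a < 3 -> 3 <= b -> c < 3 -> 3 <= d -> (a != c) || (b != d) ->
     forall z, z \in interior (Q a b) -> z \notin interior (Q c d)) ->
  contains_subdivision K33 g.
Proof.
move=> gs inj HQ Hv Hd.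
pose P (a b : 'I_6) := if a < 3 then Q a b else rev (belast (phi b) (Q b a)).
have K3 : forall a b : 'I_6, K33 a b -> if a < 3 then 3 <= b else b < 3.
  move=> a b; rewrite /K33; case: ltnP => Ha; case: ltnP => Hb //=.
have HI : forall a b z, K33 a b -> (z \in interior (P a b)) =
   (z \in interior (Q (if a < 3 then a else b) (if a < 3 then b else a))).
  move=> a b z /K3; rewrite /P; case: ifP => Ha Hb //.
  have [_ _ Hu] := HQ b a Hb ltac:(by rewrite leqNgt Ha).
  exact: mem_interior_rev.
exists phi, P; split => //.
- move=> a b /K3; rewrite /P; case: ifP => Ha Hb; first exact: HQ.
  have [Hp Hl Hu] := HQ b a Hb ltac:(by rewrite leqNgt Ha).
  split.
  + by rewrite -Hl; apply: path_rev_belast.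
  + by rewrite -{1}Hl last_rev_belast.
  + by rewrite -Hl; apply: uniq_rev_belast.
- move=> a b v Hab; rewrite HI //; move/K3: Hab.
  case: ifP => Ha Hb; first exact: Hv.
  by apply: Hv => //; rewrite leqNgt Ha.
- move=> a b c d Hab Hcd Hne z; rewrite !HI //.
  move/K3: Hab; move/K3: Hcd.
  case: ifP => Hc Hd'; case: ifP => Ha Hb; apply: Hd => //; try by rewrite leqNgt ?Ha ?Hc.
  + case: (eqVneq a c) => [Eac|] //=; case: (eqVneq b d) => [Ebd|] //=.
    by exfalso; apply: Hne; left.
  + case: (eqVneq b c) => [Ebc|] //=; case: (eqVneq a d) => [Ead|] //=.
    by exfalso; apply: Hne; right.
  + case: (eqVneq a d) => [Ead|] //=; case: (eqVneq b c) => [Ebc|] //=.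
    by exfalso; apply: Hne; right.
  + case: (eqVneq b d) => [Ebd|] //=; case: (eqVneq a c) => [Eac|] //=.
    by exfalso; apply: Hne; left.
Qed.

Section Theta.
Variables (T : finType) (e : rel T).
Hypothesis He : simple_graph e.

Lemma shadow_sym : symmetric (shadow_rel e).
Proof.
case: He => es _.
by case=> [x|x] [y|y] //=; rewrite eq_sym.
Qed.

Lemma path_inl x p : path (shadow_rel e) (inl x) (map inl p) = path e x p.
Proof. by elim: p x => //= y p IH x; rewrite IH. Qed.

Lemma shadow_tail b q w : path e b q -> last b q = w -> uniq (b :: q) ->
  exists s, [/\ path (shadow_rel e) (inr w) s, last (inr w) s = inl b, uniq (inr w :: s)
     & forall z, z \in interior s -> exists2 v, z = inl v & (v \in q) && (v != w)].
Proof.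
case: He => es _.
case: q => [|c q] Hp Hl Hu.
  rewrite /= in Hl; subst w.
  by exists [:: inl b]; rewrite /= eqxx; split.
have Hr := path_rev_belast es Hp; rewrite Hl in Hr.
have Hu' := uniq_rev_belast Hu; rewrite Hl in Hu'.
have Hlast := last_rev_belast b (c :: q); rewrite Hl in Hlast.
set r := rev (belast b (c :: q)) in Hr Hu' Hlast *.
have Hmem : forall v, v \in r -> v != b -> v \in c :: q.
  move=> v; rewrite mem_rev => /mem_belast; rewrite in_cons => /orP[/eqP->|//].
  by rewrite eqxx.
exists (map inl r).
case Er: r Hr Hu' Hlast Hmem => [|r0 r'] Hr Hu' Hlast Hmem.
  by move: Er; rewrite /r /= rev_cons; case: (rev _).
have /andP[Hwr0 Hr'] : e w r0 && path e r0 r' := Hr.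
have Hu2 : uniq (inr w :: map inl (r0 :: r')).
  rewrite cons_uniq map_inj_uniq; last by move=> ? ? [].
  have Hu'' : uniq (r0 :: r') by case/andP: Hu'.
  rewrite Hu'' andbT.
  by apply/mapP => [[v _]].
split => //.
- by rewrite /= path_inl Hr' andbT Hwr0 orbT.
- by rewrite /= last_map -Hlast.
- move=> z; move: (Hu2); rewrite cons_uniq => /andP[_ Hu3].
  rewrite (mem_interior (inr w) _ Hu3) -/(map inl (r0 :: r')).
  have -> : last (inr w) (map inl (r0 :: r')) = inl b by rewrite /= last_map -Hlast.
  case/andP => /mapP [v Hv ->] Hvb.
  exists v => //.
  have Hvb' : v != b by apply: contraNneq Hvb => ->.
  rewrite Hmem //=.
  by move/andP: Hu' => [Hw _]; apply: contraNneq Hw => <-.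
Qed.

Lemma Dq (w x : T) b q b' q' : (forall z, z != w -> z \in b :: q -> z \notin b' :: q') ->
  x \in q -> x != w -> x \notin q'.
Proof.
move=> H Hx Hxw; have := H x Hxw; rewrite in_cons Hx orbT => /(_ isT).
by rewrite in_cons negb_or => /andP[].
Qed.

Lemma Dq' (w x : T) b q b' q' : (forall z, z != w -> z \in b :: q -> z \notin b' :: q') ->
  x \in q' -> x != w -> x \notin q.
Proof.
move=> H Hx Hxw; apply/negP => Hq; move: (Dq H Hq Hxw); by rewrite Hx.
Qed.

Lemma theta u w b1 b2 b3 q1 q2 q3 :
  path e u (b1 :: q1) -> last b1 q1 = w -> uniq (u :: b1 :: q1) ->
  path e u (b2 :: q2) -> last b2 q2 = w -> uniq (u :: b2 :: q2) ->
  path e u (b3 :: q3) -> last b3 q3 = w -> uniq (u :: b3 :: q3) ->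
  b2 != w -> b3 != w ->
  (forall z, z != w -> z \in b1 :: q1 -> z \notin b2 :: q2) ->
  (forall z, z != w -> z \in b1 :: q1 -> z \notin b3 :: q3) ->
  (forall z, z != w -> z \in b2 :: q2 -> z \notin b3 :: q3) ->
  contains_subdivision K33 (shadow_rel e).
Proof.
move=> p1 l1 u1 p2 l2 u2 p3 l3 u3 b2w b3w D12 D13 D23.
have /andP[e1 pp1] : e u b1 && path e b1 q1 := p1.
have /andP[e2 pp2] : e u b2 && path e b2 q2 := p2.
have /andP[e3 pp3] : e u b3 && path e b3 q3 := p3.
have /andP[nu1 uu1] : (u \notin b1 :: q1) && uniq (b1 :: q1) := u1.
have /andP[nu2 uu2] : (u \notin b2 :: q2) && uniq (b2 :: q2) := u2.
have /andP[nu3 uu3] : (u \notin b3 :: q3) && uniq (b3 :: q3) := u3.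
have [s1 [sp1 sl1 su1 si1]] := shadow_tail pp1 l1 uu1.
have [s2 [sp2 sl2 su2 si2]] := shadow_tail pp2 l2 uu2.
have [s3 [sp3 sl3 su3 si3]] := shadow_tail pp3 l3 uu3.
have uw : u != w.
  have Hw : w \in b1 :: q1 by rewrite -l1 mem_last.
  by apply: (contraNneq _ nu1) => ->.
have ub1 : u != b1 by apply: (contraNneq _ nu1) => ->; rewrite mem_head.
have ub2 : u != b2 by apply: (contraNneq _ nu2) => ->; rewrite mem_head.
have ub3 : u != b3 by apply: (contraNneq _ nu3) => ->; rewrite mem_head.
have b12 : b1 != b2.
  apply/eqP => E.
  have H := D12 b1 (ltac:(by rewrite E)) (mem_head _ _).
  by rewrite E mem_head in H.
have b13 : b1 != b3.
  apply/eqP => E.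
  have H := D13 b1 (ltac:(by rewrite E)) (mem_head _ _).
  by rewrite E mem_head in H.
have b23 : b2 != b3.
  apply/eqP => E.
  have H := D23 b2 (ltac:(by rewrite E)) (mem_head _ _).
  by rewrite E mem_head in H.
have D : [&& u != w, u != b1, u != b2, u != b3, b1 != b2, b1 != b3 & b2 != b3].
  by rewrite uw ub1 ub2 ub3 b12 b13 b23.
pose phi (i : 'I_6) := nth (inl u) [:: inl u; inr u; inr w; inl b1; inl b2; inl b3] i.
pose Q (a b : 'I_6) := if val a == 2 then nth [::] [:: [::]; [::]; [::]; s1; s2; s3] (val b) else [:: phi b].
apply: (@K33_build _ _ phi Q).
- exact: shadow_sym.
- move=> i j H; apply/val_inj; move: H.
  case: i => [[|[|[|[|[|[|i]]]]]] Hi] //; case: j => [[|[|[|[|[|[|j]]]]]] Hj] //;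
  rewrite /phi /= => -[] E //; by move: D; rewrite E eqxx /= ?andbF.
- move=> [[|[|[|a]]] Ha] [[|[|[|[|[|[|b]]]]]] Hb] //= _ _.
  1-6: split => //; rewrite ?e1 ?e2 ?e3 ?orbT //.
  1-3: by rewrite /Q /phi /= !inE andbT; apply/eqP => -[E]; move: D; rewrite E eqxx /= ?andbF.
- have R1 : forall x, x \in q1 -> x != w -> [&& x != u, x != b1, x != b2 & x != b3].
    move=> x Hx Hxw; have Hx' : x \in b1 :: q1 by rewrite in_cons Hx orbT.
    apply/and4P; split.
    + by apply: (contraNneq _ nu1) => E; rewrite -E.
    + have nb : b1 \notin q1 := (andP uu1).1.
      by apply: (contraNneq _ nb) => E; rewrite -E.
    + by apply: (contraNneq _ (D12 x Hxw Hx')) => ->; exact: mem_head.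
    + by apply: (contraNneq _ (D13 x Hxw Hx')) => ->; exact: mem_head.
  have R2 : forall x, x \in q2 -> x != w -> [&& x != u, x != b1, x != b2 & x != b3].
    move=> x Hx Hxw; have Hx' : x \in b2 :: q2 by rewrite in_cons Hx orbT.
    apply/and4P; split.
    + by apply: (contraNneq _ nu2) => E; rewrite -E.
    + apply/eqP => E; subst x.
      by rewrite (negbTE (D12 _ Hxw (mem_head _ _))) in Hx'.
    + have nb : b2 \notin q2 := (andP uu2).1.
      by apply: (contraNneq _ nb) => E; rewrite -E.
    + by apply: (contraNneq _ (D23 x Hxw Hx')) => ->; exact: mem_head.
  have R3 : forall x, x \in q3 -> x != w -> [&& x != u, x != b1, x != b2 & x != b3].
    move=> x Hx Hxw; have Hx' : x \in b3 :: q3 by rewrite in_cons Hx orbT.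
    apply/and4P; split.
    + by apply: (contraNneq _ nu3) => E; rewrite -E.
    + apply/eqP => E; subst x.
      by rewrite (negbTE (D13 _ Hxw (mem_head _ _))) in Hx'.
    + apply/eqP => E; subst x.
      by rewrite (negbTE (D23 _ Hxw (mem_head _ _))) in Hx'.
    + have nb : b3 \notin q3 := (andP uu3).1.
      by apply: (contraNneq _ nb) => E; rewrite -E.
  move=> a b v _ _; rewrite /Q; case: ifP => Ha2; last by [].
  case: b => [[|[|[|[|[|[|b]]]]]] Hb] //=.
  + apply/negP => /si1 [x Ex /andP[Hx Hxw]]; move: (R1 x Hx Hxw) Ex.
    by case: v => [[|[|[|[|[|[|v]]]]]] Hv] //=; rewrite /phi /= => Rx -[] E; move: Rx; rewrite -E eqxx /= ?andbF.
  + apply/negP => /si2 [x Ex /andP[Hx Hxw]]; move: (R2 x Hx Hxw) Ex.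
    by case: v => [[|[|[|[|[|[|v]]]]]] Hv] //=; rewrite /phi /= => Rx -[] E; move: Rx; rewrite -E eqxx /= ?andbF.
  + apply/negP => /si3 [x Ex /andP[Hx Hxw]]; move: (R3 x Hx Hxw) Ex.
    by case: v => [[|[|[|[|[|[|v]]]]]] Hv] //=; rewrite /phi /= => Rx -[] E; move: Rx; rewrite -E eqxx /= ?andbF.
- move=> a b c d _ _ _ _ Hne z; rewrite /Q; case: ifP => Ha2; last by [].
  case: ifP => Hc2; last by [].
  have Eac : a = c by apply: val_inj; rewrite /= (eqP Ha2) (eqP Hc2).
  rewrite Eac eqxx /= in Hne.
  case: b Hne => [[|[|[|[|[|[|b]]]]]] Hb] //=; case: d => [[|[|[|[|[|[|d]]]]]] Hd] //= Hne.
  + move/si1 => [x -> /andP[Hx Hxw]]; apply/negP => /si2 [y [] E /andP[Hy _]]; subst y.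
    by rewrite (negbTE (Dq D12 Hx Hxw)) in Hy.
  + move/si1 => [x -> /andP[Hx Hxw]]; apply/negP => /si3 [y [] E /andP[Hy _]]; subst y.
    by rewrite (negbTE (Dq D13 Hx Hxw)) in Hy.
  + move/si2 => [x -> /andP[Hx Hxw]]; apply/negP => /si1 [y [] E /andP[Hy _]]; subst y.
    by rewrite (negbTE (Dq' D12 Hx Hxw)) in Hy.
  + move/si2 => [x -> /andP[Hx Hxw]]; apply/negP => /si3 [y [] E /andP[Hy _]]; subst y.
    by rewrite (negbTE (Dq D23 Hx Hxw)) in Hy.
  + move/si3 => [x -> /andP[Hx Hxw]]; apply/negP => /si1 [y [] E /andP[Hy _]]; subst y.
    by rewrite (negbTE (Dq' D13 Hx Hxw)) in Hy.
  + move/si3 => [x -> /andP[Hx Hxw]]; apply/negP => /si2 [y [] E /andP[Hy _]]; subst y.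
    by rewrite (negbTE (Dq' D23 Hx Hxw)) in Hy.
Qed.

Lemma theta' u w p1 p2 p3 : u != w ->
  path e u p1 -> last u p1 = w -> uniq (u :: p1) ->
  path e u p2 -> last u p2 = w -> uniq (u :: p2) ->
  path e u p3 -> last u p3 = w -> uniq (u :: p3) ->
  head u p2 != w -> head u p3 != w ->
  (forall z, z != w -> z \in p1 -> z \notin p2) ->
  (forall z, z != w -> z \in p1 -> z \notin p3) ->
  (forall z, z != w -> z \in p2 -> z \notin p3) ->
  contains_subdivision K33 (shadow_rel e).
Proof.
move=> uw.
case: p1 => [|b1 q1]; first by move=> _ E; rewrite /= in E; rewrite E eqxx in uw.
case: p2 => [|b2 q2]; first by move=> _ _ _ _ E; rewrite /= in E; rewrite E eqxx in uw.
case: p3 => [|b3 q3]; first by move=> _ _ _ _ _ _ _ E; rewrite /= in E; rewrite E eqxx in uw.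
move=> p1 l1 u1 p2 l2 u2 p3 l3 u3 h2 h3 D12 D13 D23.
exact: (theta p1 l1 u1 p2 l2 u2 p3 l3 u3 h2 h3 D12 D13 D23).
Qed.

End Theta.

Lemma ndist (a b c d : 'I_4) :
  ((val a != val c) || (val b != val d)) && ((val a != val d) || (val b != val c)) ->
  ~ ((a = c /\ b = d) \/ (a = d /\ b = c)).
Proof. by move=> /andP[H1 H2] [[E1 E2]|[E1 E2]]; subst; rewrite !eqxx in H1 H2. Qed.

Theorem lemma5p5 (T : finType) (e : rel T) :
  simple_graph e ->
  contains_subdivision K4minus e ->
  contains_subdivision K33 (shadow_rel e).
Proof.
move=> He [phi [P [inj Hp Hbr Hdis]]].
pose i0 : 'I_4 := @Ordinal 4 0 isT.
pose i1 : 'I_4 := @Ordinal 4 1 isT.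
pose i2 : 'I_4 := @Ordinal 4 2 isT.
pose i3 : 'I_4 := @Ordinal 4 3 isT.
have K01 : K4minus i0 i1 by [].
have K02 : K4minus i0 i2 by [].
have K03 : K4minus i0 i3 by [].
have K21 : K4minus i2 i1 by [].
have K31 : K4minus i3 i1 by [].
have nphi : forall i j, val i != val j -> phi i != phi j.
  by move=> i j H; apply: contra H => /eqP /inj ->.
have memP : forall a b z, K4minus a b -> z \in P a b -> z = phi b \/ z \in interior (P a b).
  move=> a b z Kab Hz; have [_ Hl Hu] := Hp a b Kab.
  have Hu' : uniq (P a b) := (andP Hu).2.
  rewrite (mem_interior (phi a) _ Hu') Hz Hl /=.
  by case: (eqVneq z (phi b)) => [E|N]; [left | right].
have Hb : forall a b v, K4minus a b -> phi v \in interior (P a b) -> False.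
  by move=> a b v K H; move: (Hbr a b v K); rewrite H.
have Hd : forall a b c d z, K4minus a b -> K4minus c d ->
    ((val a != val c) || (val b != val d)) && ((val a != val d) || (val b != val c)) ->
    z \in interior (P a b) -> z \in interior (P c d) -> False.
  move=> a b c d z K1 K2 N H1 H2.
  by move: (Hdis a b c d K1 K2 (ndist N) z H1); rewrite H2.
have side : forall m : 'I_4, K4minus i0 m -> K4minus m i1 -> val m != 0 -> val m != 1 ->
  [/\ path e (phi i0) (P i0 m ++ P m i1), last (phi i0) (P i0 m ++ P m i1) = phi i1,
      uniq (phi i0 :: P i0 m ++ P m i1), head (phi i0) (P i0 m ++ P m i1) != phi i1
    & forall z, z \in P i0 m ++ P m i1 -> z != phi i1 ->
        [\/ z = phi m, z \in interior (P i0 m) | z \in interior (P m i1)]].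
  move=> m Km0 Km1 m0 m1.
  have [pa la ua] := Hp _ _ Km0.
  have [pb lb ub] := Hp _ _ Km1.
  have N01 : phi i0 != phi i1 := nphi i0 i1 isT.
  have Nm1 : phi m != phi i1 := nphi m i1 m1.
  have Nm0 : phi i0 != phi m by apply: nphi; rewrite eq_sym.
  have nd : ((val i0 != val m) || (val m != val i1)) && ((val i0 != val i1) || (val m != val m)).
    by rewrite /= eq_sym m0.
  split.
  - by rewrite cat_path pa la pb.
  - by rewrite last_cat la lb.
  - rewrite /= mem_cat cat_uniq negb_or.
    have /andP[-> ->] : (phi i0 \notin P i0 m) && uniq (P i0 m) := ua.
    have ub' : uniq (P m i1) := (andP ub).2.
    rewrite ub' andbT /=.
    apply/andP; split.
    + apply/negP => /(memP _ _ _ Km1) [E|H]; first by rewrite E eqxx in N01.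
      exact: (Hb _ _ _ Km1 H).
    + apply/hasPn => z Hz1; apply/negP => Hz0.
      case: (memP _ _ _ Km1 Hz1) => [E|H1].
        subst z. case: (memP _ _ _ Km0 Hz0) => [E|H0]; first by rewrite E eqxx in Nm1.
        exact: (Hb _ _ _ Km0 H0).
      case: (memP _ _ _ Km0 Hz0) => [E|H0].
        subst z; exact: (Hb _ _ _ Km1 H1).
      exact: (Hd _ _ _ _ _ Km0 Km1 nd H0 H1).
  - have Hh : forall b, b \in P i0 m -> b != phi i1.
      move=> b Hbm; case: (memP _ _ _ Km0 Hbm) => [->//|H].
      apply/eqP => Eb; subst b; exact: (Hb _ _ _ Km0 H).
    move: Hh la; case: (P i0 m) => [|b q] Hh la'.
      by rewrite /= in la'; rewrite la' eqxx in Nm0.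
    by apply: Hh; rewrite mem_head.
  - move=> z; rewrite mem_cat => /orP[Hz|Hz] Hzw.
    + by case: (memP _ _ _ Km0 Hz) => [->|H]; [apply: Or31 | apply: Or32].
    + by case: (memP _ _ _ Km1 Hz) => [E|H]; [rewrite E eqxx in Hzw | apply: Or33].
have [pa2 la2 ua2 ha2 sd2] := side i2 K02 K21 isT isT.
have [pa3 la3 ua3 ha3 sd3] := side i3 K03 K31 isT isT.
have [p1 l1 u1] := Hp _ _ K01.
apply: (theta' He (nphi i0 i1 isT) p1 l1 u1 pa2 la2 ua2 pa3 la3 ua3 ha2 ha3).
- move=> z Hzw Hz1; apply/negP => Hz2.
  case: (memP _ _ _ K01 Hz1) => [E|H1]; first by rewrite E eqxx in Hzw.
  case: (sd2 z Hz2 Hzw) => [E|H|H].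
  + subst z; exact: (Hb _ _ _ K01 H1).
  + exact: (Hd _ _ _ _ _ K01 K02 isT H1 H).
  + exact: (Hd _ _ _ _ _ K01 K21 isT H1 H).
- move=> z Hzw Hz1; apply/negP => Hz2.
  case: (memP _ _ _ K01 Hz1) => [E|H1]; first by rewrite E eqxx in Hzw.
  case: (sd3 z Hz2 Hzw) => [E|H|H].
  + subst z; exact: (Hb _ _ _ K01 H1).
  + exact: (Hd _ _ _ _ _ K01 K03 isT H1 H).
  + exact: (Hd _ _ _ _ _ K01 K31 isT H1 H).
- move=> z Hzw Hz2; apply/negP => Hz3.
  case: (sd2 z Hz2 Hzw) => [E2|H2|H2]; case: (sd3 z Hz3 Hzw) => [E3|H3|H3].
  + by move: (nphi i2 i3 isT); rewrite -E2 -E3 eqxx.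
  + by subst z; exact: (Hb _ _ _ K03 H3).
  + by subst z; exact: (Hb _ _ _ K31 H3).
  + by subst z; exact: (Hb _ _ _ K02 H2).
  + exact: (Hd _ _ _ _ _ K02 K03 isT H2 H3).
  + exact: (Hd _ _ _ _ _ K02 K31 isT H2 H3).
  + by subst z; exact: (Hb _ _ _ K21 H2).
  + exact: (Hd _ _ _ _ _ K21 K03 isT H2 H3).
  + exact: (Hd _ _ _ _ _ K21 K31 isT H2 H3).
Qed.
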